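(* Consider an advertiser in a repeated single-slot hybrid auction with per-click value $v>0$ that knows its true click-through rate $p$, while the auctioneer's initial prior on this rate is $\mathrm{Beta}(\alpha,\beta)$ (density proportional to $x^{\alpha-1}(1-x)^{\beta-1}$), Bayes-updated after each impression, so that after $T$ impressions with $N$ clicks it is $\mathrm{Beta}(\alpha+N,\beta+T-N)$ with mean $(\alpha+N)/(\alpha+\beta+T)$. Fix $\epsilon>0$ and let $p'=p(1-\epsilon)$. In the explore phase the advertiser bids $(vp',v)$ (per-impression bid $vp'$, per-click bid $v$), receiving impressions charged per impression, and the explore phase stops as soon as the auctioneer's posterior mean is at least $p(1-\epsilon)$ (so it has length $0$ if the initial mean $\alpha/(\alpha+\beta)$ is already at least $p(1-\epsilon)$). If the explore phase consists of $T$ impressions resulting in $N$ clicks, its worst-case loss in revenue for the advertiser is defined as $v(Tp'-N)$. Then the explore phase incurs no loss in revenue for the advertiser, i.e. $v(Tp'-N)\le 0$.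
   Context: Loss in revenue means the amount paid to the auctioneer minus the value earned from actual clicks; in the explore phase the per-impression price is at most the per-impression bid $vp'$, which gives the worst-case loss $v(Tp'-N)$. *)

(* Defs.v *)
From mathcomp Require Import all_boot all_order all_algebra.
Set Implicit Arguments. Unset Strict Implicit. Unset Printing Implicit Defensive.
Import Order.TTheory GRing.Theory Num.Theory.
Local Open Scope ring_scope.

(* click outcomes of successive impressions: c i = true iff impression i was clicked *)
Definition clicks (R : numDomainType) (c : nat -> bool) (t : nat) : R :=
  \sum_(i < t) (c i)%:R.

(* mean of the auctioneer's posterior Beta(alpha + N, beta + t - N) after t impressions *)
Definition posterior_mean (R : numFieldType) (alpha beta : R) (c : nat -> bool) (t : nat) : R :=
  (alpha + clicks R c t) / (alpha + beta + t%:R).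

Definition explore_length (R : realFieldType) (alpha beta p' : R) (c : nat -> bool) (T : nat) : Prop :=
  (forall t, (t < T)%N -> posterior_mean alpha beta c t < p') /\
  p' <= posterior_mean alpha beta c T.

Definition explore_loss (R : realFieldType) (v p' : R) (c : nat -> bool) (T : nat) : R :=
  v * (T%:R * p' - clicks R c T).

(* Main.v *)
Require Import Defs.
From mathcomp Require Import all_boot all_order all_algebra.
From mathcomp Require Import lra.
Import Order.TTheory GRing.Theory Num.Theory.
Local Open Scope ring_scope.

Theorem claim1 (R : realFieldType) (v p eps alpha beta : R) (c : nat -> bool) (T : nat) :
  0 < v -> 0 <= p -> p <= 1 -> 0 < eps -> 0 < alpha -> 0 < beta ->
  explore_length alpha beta (p * (1 - eps)) c T ->
  explore_loss v (p * (1 - eps)) c T <= 0.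
Proof.
move=> v0 p0 p1 e0 a0 b0 [Hlt Hge].
rewrite /explore_loss pmulr_rle0 // subr_le0.
case: T Hlt Hge => [|T] Hlt Hge.
  rewrite /clicks big_ord0 mul0r //.
have := Hlt 0%N isT.
rewrite /posterior_mean /clicks big_ord0 addr0.
set q := p * (1 - eps).
set N := \sum_(i < T.+1) (c i)%:R.
move: Hge; rewrite /posterior_mean /clicks -/N.
have pT : (0:R) <= T.+1%:R by rewrite ler0n.
have d0 : 0 < alpha + beta + T.+1%:R by rewrite ltr_wpDr // addr_gt0.
have d1 : 0 < alpha + beta by rewrite addr_gt0.
rewrite ler_pdivlMr // addr0 ltr_pdivrMr // => H1 H2.
rewrite mulrDr in H1.
rewrite -/q in H1. rewrite mulrC.
lra.
Qed.
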